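(* For every integer $m\ge 1$, the number of $321$-avoiding permutations of $\{1,\dots,m\}$ whose last letter is not $m$ equals $C_m-C_{m-1}$, and the number of $321$-avoiding permutations of $\{1,\dots,m\}$ whose first letter is not $1$ also equals $C_m-C_{m-1}$. Consequently, for $n\ge 3$ the number of permutations of $\{1,\dots,n\}$ containing the pattern $321$ exactly once equals $$\sum_{b=2}^{n-1}(C_b-C_{b-1})(C_{n-b+1}-C_{n-b}).$$
   Context: $C_k=\frac{(2k)!}{k!\,(k+1)!}$ denotes the $k$-th Catalan number ($C_0=1$). Permutations are written in one-line notation; a permutation $w_1\cdots w_m$ is $321$-avoiding if there are no positions $i<j<k$ with $w_i>w_j>w_k$, and contains $321$ exactly once if there is exactly one such triple of positions. *)

(* Defs.v *)
(* Permutations of {1..m} are modelled as 'S_m = {perm 'I_m}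
   on {0..m-1}; the one-line word is w_{i+1} = s i + 1 (0-indexed shift). *)
From mathcomp Require Import all_boot all_fingroup.
Set Implicit Arguments. Unset Strict Implicit. Unset Printing Implicit Defensive.

Definition catalan (k : nat) : nat := (k.*2)`! %/ (k`! * k.+1`!).

Definition occ321 (m : nat) (s : 'S_m) : nat :=
  #|[set t : 'I_m * 'I_m * 'I_m |
      [&& (t.1.1 < t.1.2)%N, (t.1.2 < t.2)%N,
          (s t.1.2 < s t.1.1)%N & (s t.2 < s t.1.2)%N]]|.

Definition avoids321 (m : nat) (s : 'S_m) : bool := occ321 s == 0.

Definition last_not_max (m : nat) (s : 'S_m) : bool :=
  [forall i : 'I_m, (val i == m.-1) ==> (val (s i) != m.-1)].

Definition first_not_min (m : nat) (s : 'S_m) : bool :=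
  [forall i : 'I_m, (val i == 0) ==> (val (s i) != 0)].

(* Main.v *)
Require Import Defs.
From mathcomp Require Import all_boot all_fingroup.
From mathcomp Require Import zify.
Set Implicit Arguments. Unset Strict Implicit. Unset Printing Implicit Defensive.


Fixpoint has21 (b : nat) (w : seq nat) : bool :=
  if w is y :: w' then ((y < b) && has (fun z => z < y) w') || has21 b w' else false.
Fixpoint has321 (w : seq nat) : bool :=
  if w is x :: w' then has21 x w' || has321 w' else false.
Fixpoint goodw (b : nat) (w : seq nat) : bool :=
  if w is x :: w' then ((b <= x) || ~~ has (fun z => z < x) w') && goodw (maxn b x) w'
  else true.

Lemma has21_max b x w : has21 (maxn b x) w = has21 b w || has21 x w.
Proof.
elim: w => //= y w ->.
have -> : (y < maxn b x) = (y < b) || (y < x) by rewrite leq_max.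
by case: (y < b); case: (y < x); case: has; case: has21; case: has21.
Qed.

Lemma has21_0 w : has21 0 w = false.
Proof. by elim: w. Qed.

Lemma goodw_spec b w : goodw b w = ~~ has321 w && ~~ has21 b w.
Proof.
elim: w b => //= x w IH b.
rewrite IH has21_max.
move: (has (fun z => z < x) w) (has21 b w) (has21 x w) (has321 w) => A B C D.
by case: (leqP b x) => Hbx /=; case: A; case: B; case: C; case: D.
Qed.

Lemma mono_sub (f : nat -> nat) (s t : seq nat) : {subset s <= t} ->
  {in t &, {mono f : x y / x < y}} -> {in s &, {mono f : x y / x < y}}.
Proof. by move=> Hst Hm u v Hu Hv; apply: Hm; apply: Hst. Qed.

Lemma has21_map f b w : {in b :: w &, {mono f : x y / x < y}} ->
  has21 (f b) (map f w) = has21 b w.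
Proof.
elim: w => //= y w IH Hm.
rewrite IH; last by apply: mono_sub Hm => u; rewrite !inE => /orP[->|->]; rewrite ?orbT.
rewrite Hm ?inE ?eqxx ?orbT //.
rewrite has_map; congr (_ && _ || _); apply: eq_in_has => z Hz /=.
by apply: Hm; rewrite !inE ?eqxx ?Hz ?orbT.
Qed.

Lemma has321_map f w : {in w &, {mono f : x y / x < y}} ->
  has321 (map f w) = has321 w.
Proof.
elim: w => //= x w IH Hm.
rewrite has21_map ?IH //; apply: mono_sub Hm => // u Hu; by rewrite inE Hu orbT.
Qed.

Lemma has21P b w : reflect (exists j k, [/\ j < k, k < size w, nth 0 w j < b & nth 0 w k < nth 0 w j]) (has21 b w).
Proof.
elim: w => [|y w IH] /=.
  by right=> -[j [k [? ? ?]]].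
apply: (iffP orP).
  case=> [/andP[Hy /(has_nthP 0)[k Hk Hz]]|/IH[j [k [H1 H2 H3 H4]]]].
    by exists 0, k.+1.
  by exists j.+1, k.+1.
case=> [[|j]] [[|k]] [H1 H2 H3 H4] //.
  by left; apply/andP; split=> //; apply/(has_nthP 0); exists k.
by right; apply/IH; exists j, k.
Qed.

Lemma has321P w : reflect (exists i j k, [/\ i < j, j < k, k < size w,
   nth 0 w j < nth 0 w i & nth 0 w k < nth 0 w j]) (has321 w).
Proof.
elim: w => [|x w IH] /=.
  by right=> -[i [j [k [? ? ? ?]]]].
apply: (iffP orP).
  case=> [/has21P[j [k [H1 H2 H3 H4]]]|/IH[i [j [k [H1 H2 H3 H4 H5]]]]].
    by exists 0, j.+1, k.+1.
  by exists i.+1, j.+1, k.+1.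
case=> [[|i]] [[|j]] [[|k]] [H1 H2 H3 H4 H5] //.
  by left; apply/has21P; exists j, k.
by right; apply/IH; exists i, j, k.
Qed.


Lemma count_uniq_eq (P : pred (seq nat)) (l1 l2 : seq (seq nat)) :
  uniq l1 -> uniq l2 -> (forall w, P w -> (w \in l1) = (w \in l2)) ->
  count P l1 = count P l2.
Proof.
move=> U1 U2 H; rewrite -!size_filter; apply: perm_size.
apply: uniq_perm; rewrite ?filter_uniq // => w; rewrite !mem_filter.
by case Pw: (P w) => //=; apply: H.
Qed.

Lemma perm_count_eq (T : eqType) (Q : pred T) (l1 l2 : seq T) :
  perm_eq l1 l2 -> count Q l1 = count Q l2.
Proof. by move/seq.permP. Qed.

Lemma perms_count_eq (Q : pred (seq nat)) s t : perm_eq s t ->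
  count Q (permutations s) = count Q (permutations t).
Proof. by move=> H; apply/perm_count_eq/perm_permutations. Qed.

Lemma cons_dec (Q : pred (seq nat)) s : uniq s -> 0 < size s ->
  count Q (permutations s) =
  \sum_(x <- s) count (fun w => Q (x :: w)) (permutations (rem x s)).
Proof.
move=> Us Hs; rewrite (perm_count_eq _ (permutationsE Hs)) count_flatten sumnE big_map.
rewrite undup_id // big_map; apply: eq_bigr => x _; by rewrite count_map.
Qed.

Lemma rev_perms (Q : pred (seq nat)) s :
  count Q (permutations s) = count (fun w => Q (rev w)) (permutations s).
Proof.
transitivity (count Q (map rev (permutations s))); last by rewrite count_map.
apply: perm_count_eq; apply: uniq_perm.
- exact: permutations_uniq.
- by rewrite map_inj_uniq ?permutations_uniq //; exact: (can_inj (@revK _)).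
move=> t; apply/idP/idP.
  rewrite mem_permutations => Ht; apply/mapP; exists (rev t); last by rewrite revK.
  by rewrite mem_permutations perm_rev.
by case/mapP=> u; rewrite !mem_permutations => Hu ->; rewrite perm_rev.
Qed.

Lemma rcons_dec (Q : pred (seq nat)) s : uniq s -> 0 < size s ->
  count Q (permutations s) =
  \sum_(x <- s) count (fun w => Q (rcons w x)) (permutations (rem x s)).
Proof.
move=> Us Hs; rewrite rev_perms cons_dec //; apply: eq_bigr => x _.
rewrite (rev_perms (fun w => Q (rcons w x))); apply: eq_count => w /=.
by rewrite rev_cons.
Qed.

Lemma map_perms (f : nat -> nat) (Q : pred (seq nat)) s : injective f ->
  count Q (permutations (map f s)) = count (fun w => Q (map f w)) (permutations s).
Proof.
move=> If; transitivity (count Q (map (map f) (permutations s))); last by rewrite count_map.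
apply: perm_count_eq; apply: uniq_perm.
- exact: permutations_uniq.
- by rewrite map_inj_uniq ?permutations_uniq //; exact: inj_map.
move=> t; apply/idP/idP.
  rewrite mem_permutations => Ht.
  pose u := map (fun y => nth 0 s (index y (map f s))) t.
  have Hu : map f u = t.
    rewrite /u -map_comp -[RHS]map_id; apply/eq_in_map => y Hy /=.
    have Hy' : y \in map f s by rewrite -(perm_mem Ht).
    rewrite -(nth_map 0 0) ?nth_index //.
    by rewrite -(size_map f) index_mem.
  apply/mapP; exists u => //; rewrite mem_permutations.
  by apply: (perm_map_inj If); rewrite Hu.
by case/mapP=> u; rewrite !mem_permutations => Hu ->; apply: perm_map.
Qed.

Lemma sorted_count_le (s : seq nat) b t : sorted ltn s -> t < size s ->
  (count (fun y => y < b) s <= t) = (b <= nth 0 s t).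
Proof.
elim: s t => [|y s IH] t //= Hs Ht.
have Hall : all (fun z => y < z) s.
  by apply: (order_path_min ltn_trans) Hs.
have Hs' : sorted ltn s by apply: (path_sorted Hs).
have H0 : b <= y -> count (fun y0 => y0 < b) s = 0.
  move=> Hyb; apply/eqP; rewrite -leqn0 leqNgt -has_count; apply/hasPn => z Hz /=.
  by move/allP: Hall => /(_ z Hz) /= ?; lia.
case: t Ht => [|t] Ht /=.
  case: (ltnP y b) => Hyb /=; first by [].
  by rewrite H0.
case: (ltnP y b) => Hyb /=.
  by rewrite add1n ltnS IH.
rewrite H0 //; symmetry.
have : nth 0 s t \in s by apply: mem_nth.
by move/allP: Hall => Hall /Hall /= ?; lia.
Qed.

Lemma sorted_count_nth (s : seq nat) t : sorted ltn s -> t < size s ->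
  count (fun y => y < nth 0 s t) s = t.
Proof.
move=> Hs Ht; apply/eqP; rewrite eqn_leq (sorted_count_le _ Hs Ht) leqnn /=.
case: t Ht => // t Ht; rewrite ltnNge (sorted_count_le _ Hs (ltnW Ht)) -ltnNge.
by apply: (sorted_ltn_nth ltn_trans 0 Hs); rewrite ?inE ?ltnSn //; apply: ltnW.
Qed.


Definition Fb r j := 'C(r.*2 - j, r) - 'C(r.*2 - j, r.+1).

Lemma bin_dec m k : m <= k.*2.+1 -> 'C(m, k.+1) <= 'C(m, k).
Proof.
move=> H; have E := mul_bin_left m k.
have H2 : m - k <= k.+1 by lia.
rewrite -(leq_pmul2l (ltn0Sn k)) E; apply: leq_mul => //.
Qed.

Lemma FbK r j : j <= r -> Fb r.+1 j.+1 = Fb r j + Fb r.+1 j.+2.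
Proof.
move=> Hj; rewrite /Fb.
have -> : r.+1.*2 - j.+1 = (r.*2 - j).+1 by lia.
have -> : r.+1.*2 - j.+2 = r.*2 - j by lia.
set n := r.*2 - j.
rewrite !binS.
have H1 : 'C(n, r.+1) <= 'C(n, r) by apply: bin_dec; rewrite /n; lia.
have H2 : 'C(n, r.+2) <= 'C(n, r.+1) by apply: bin_dec; rewrite /n; lia.
lia.
Qed.

Lemma Fb0 r : Fb r.+1 0 = Fb r.+1 1.
Proof.
rewrite /Fb subn0.
have -> : r.+1.*2 - 1 = r.*2.+1 by lia.
have -> : r.+1.*2 = r.*2.+2 by lia.
rewrite (binS r.*2.+1 r) (binS r.*2.+1 r.+1).
have E : 'C(r.*2.+1, r) = 'C(r.*2.+1, r.+1).
  have := bin_sub (n := r.*2.+1) (m := r.+1); rewrite -/(r.+1 <= _).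
  have -> : r.*2.+1 - r.+1 = r by lia.
  by move=> ->; lia.
have H2 : 'C(r.*2.+1, r.+2) <= 'C(r.*2.+1, r.+1) by apply: bin_dec; lia.
lia.
Qed.

Lemma FbS r j : j <= r.+1 -> \sum_(j <= t < r.+1) Fb r t = Fb r.+1 j.+1.
Proof.
move=> Hj.
suff H : forall d, d <= r.+1 ->
  \sum_(r.+1 - d <= t < r.+1) Fb r t = Fb r.+1 (r.+1 - d).+1.
  have := H (r.+1 - j) (leq_subr _ _).
  by have -> : r.+1 - (r.+1 - j) = j by lia.
elim=> [|d IH] Hd.
  rewrite subn0 big_geq // /Fb.
  have -> : r.+1.*2 - r.+2 = r by lia.
  by rewrite !bin_small.
rewrite big_ltn; last by lia.
have -> : (r.+1 - d.+1).+1 = r.+1 - d by lia.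
rewrite IH; last by lia.
have -> : r.+1 - d.+1 = r - d by lia.
have -> : r.+1 - d = (r - d).+1 by lia.
by rewrite -FbK //; lia.
Qed.

Lemma FbNUM r j : j <= r.+1 ->
  \sum_(0 <= t < r.+1) (if j <= t then Fb r t else if t == 0 then Fb r j.-1 else 0)
  = Fb r.+1 j.
Proof.
case: j => [|j] Hj.
  by rewrite (eq_bigr (fun t => Fb r t)) // FbS // Fb0.
rewrite big_ltn // /=.
rewrite (big_cat_nat (n := j.+1)) //=.
rewrite big_nat_cond big1; last first.
  by move=> t /andP[/andP[H1 H2] _]; rewrite leqNgt H2 /=; case: t H1 H2.
rewrite add0n (eq_big_nat _ _ (F2 := fun t => Fb r t)); last first.
  by move=> t /andP[H1 H2]; rewrite H1.
rewrite FbS; last by lia.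
by rewrite (@FbK r j Hj).
Qed.

Lemma catalanE n : catalan n = Fb n 0.
Proof.
rewrite /catalan /Fb subn0.
have E := mul_bin_left n.*2 n.
have F := bin_fact (leq_addl n n : n <= n + n).
have En : n.*2 - n = n by lia.
have En2 : n + n - n = n by lia.
rewrite En in E; rewrite En2 in F; rewrite -addnn in E *.
have H1 : 'C(n + n, n.+1) <= 'C(n + n, n) by apply: bin_dec; lia.
move: E F H1; set C := 'C(n + n, n); set C1 := 'C(n + n, n.+1) => E F H1.
have -> : (n + n)`! = (C - C1) * (n`! * n.+1`!).
  rewrite -F factS.
  have H : n.+1 * (C - C1) = C by rewrite mulnBr E; lia.
  rewrite -{1}H; lia.
by rewrite mulnK // muln_gt0 !fact_gt0.
Qed.


Lemma Ncount r : forall s b, uniq s -> size s = r ->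
  count (goodw b) (permutations s) = Fb r (count (fun u => u < b) s).
Proof.
elim: r => [|r IH] s b Us Hs.
  by rewrite (size0nil Hs).
have Hp : perm_eq (sort leq s) s by rewrite perm_sort.
rewrite -(perms_count_eq _ Hp) -(perm_count_eq _ Hp).
have Us' : uniq (sort leq s) by rewrite sort_uniq.
have Hs' : size (sort leq s) = r.+1 by rewrite size_sort.
have Hsort : sorted ltn (sort leq s).
  by rewrite ltn_sorted_uniq_leq Us' sort_sorted //; exact: leq_total.
move: (sort leq s) Us' Hs' Hsort => {Hp Us Hs} s Us Hs Hsort.
set j := count (fun u => u < b) s.
have Hj : j <= r.+1 by rewrite -Hs count_size.
rewrite cons_dec ?Hs // (big_nth 0) Hs -(FbNUM Hj).
apply: eq_big_nat => t /andP[_ Ht].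
set u := nth 0 s t.
have Hu : u \in s by apply: mem_nth; rewrite Hs.
have Ur : uniq (rem u s) by apply: rem_uniq.
have Hr : size (rem u s) = r by rewrite size_rem // Hs.
have Prem : perm_eq s (u :: rem u s) by apply: perm_to_rem.
have E1 : (b <= u) = (j <= t) by rewrite sorted_count_le // Hs.
have Cu : count (fun z => z < u) (rem u s) = t.
  rewrite -(sorted_count_nth Hsort (t := t)) ?Hs // -/u.
  by rewrite (perm_count_eq _ Prem) /= ltnn.
have E2 : has (fun z => z < u) (rem u s) = (0 < t) by rewrite has_count Cu.
transitivity (count (fun w => ((b <= u) || ~~ has (fun z => z < u) (rem u s))
                && goodw (maxn b u) w) (permutations (rem u s))).
  apply: eq_in_count => w; rewrite mem_permutations => Hw /=.
  by rewrite (perm_has _ Hw).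
rewrite E1 E2.
case: (leqP j t) => Hjt /=.
  rewrite (eq_count (a2 := goodw (maxn b u))) // IH //.
  have -> : maxn b u = u by apply/maxn_idPr; rewrite E1.
  by rewrite Cu.
case: (posnP t) => Ht0.
  rewrite (eq_count (a2 := goodw (maxn b u))) // IH //.
  have Hub : u < b by rewrite ltnNge E1 -ltnNge.
  have -> : maxn b u = b by apply/maxn_idPl; apply: ltnW.
  congr Fb; rewrite /j (perm_count_eq _ Prem) /= Hub; lia.

by rewrite (eq_count (a2 := pred0)) // count_pred0.
Qed.

Lemma avoid_count n : count (fun w => ~~ has321 w) (permutations (iota 0 n)) = catalan n.
Proof.
rewrite catalanE.
have := @Ncount n (iota 0 n) 0 (iota_uniq 0 n) (size_iota 0 n).
have -> : count (fun u => u < 0) (iota 0 n) = 0 by rewrite count_pred0.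
move=> <-; apply: eq_count => w.
by rewrite goodw_spec has21_0 andbT.
Qed.


Lemma rem_rcons_in (x y : nat) s : x \in s -> rem x (rcons s y) = rcons (rem x s) y.
Proof.
elim: s => //= z s IH; rewrite inE.
case: (eqVneq z x) => [_|Hzx] //=.
move=> Hx; rewrite IH //; move: Hx; rewrite eq_sym (negbTE Hzx).
Qed.

Lemma rem_rcons_last (x : nat) s : x \notin s -> rem x (rcons s x) = s.
Proof.
elim: s => /= [|z s IH]; first by rewrite eqxx.
by rewrite inE negb_or => /andP[H1 /IH ->]; rewrite eq_sym (negbTE H1).
Qed.

Lemma count_split (T : Type) (a b : pred T) s :
  count a s = count (fun x => a x && b x) s + count (fun x => a x && ~~ b x) s.
Proof. by elim: s => //= x s ->; case: (a x); case: (b x) => /=; lia. Qed.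

Lemma has21_rcons b w M : all (fun y => y < M) w -> has21 b (rcons w M) = has21 b w.
Proof.
elim: w => [|y w IH] /=; first by rewrite andbF.
move=> /andP[HyM Hall]; rewrite IH // has_rcons.
have -> : (M < y) = false by lia.
by [].
Qed.

Lemma has321_rcons w M : all (fun y => y < M) w -> has321 (rcons w M) = has321 w.
Proof.
elim: w => [|x w IH] //= /andP[_ Hall].
by rewrite has21_rcons // IH.
Qed.

Lemma iotaSr m : iota 0 m.+1 = rcons (iota 0 m) m.
Proof. by rewrite -addn1 iotaD cats1. Qed.

Lemma part1w m : 0 < m ->
  count (fun w => ~~ has321 w && (last 0 w != m.-1)) (permutations (iota 0 m))
  = catalan m - catalan m.-1.
Proof.
case: m => // m _; rewrite [m.+1.-1]/=.
have E := count_split (fun w => ~~ has321 w) (fun w => last 0 w == m)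
            (permutations (iota 0 m.+1)).
rewrite avoid_count in E.
suff H : count (fun w => ~~ has321 w && (last 0 w == m)) (permutations (iota 0 m.+1))
          = catalan m by lia.
rewrite rcons_dec ?iota_uniq ?size_iota //.
rewrite iotaSr big_rcons /=.
rewrite big_seq_cond big1 ?addn0; last first.
  move=> x /andP[Hx _]; rewrite (eq_count (a2 := pred0)) ?count_pred0 // => w.
  rewrite /= last_rcons; have : x != m by move: Hx; rewrite mem_iota; lia.
  by move/negbTE ->; rewrite andbF.
rewrite rem_rcons_last; last by rewrite mem_iota; lia.
rewrite -avoid_count; apply: eq_in_count => w; rewrite mem_permutations => Hw /=.
rewrite last_rcons eqxx andbT has321_rcons //; apply/allP => y.
by rewrite (perm_mem Hw) mem_iota.
Qed.

Lemma mono_addn p : {in predT &, {mono addn p : x y / x < y}}.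
Proof. by move=> x y _ _ /=; rewrite ltn_add2l. Qed.

Lemma part2w_shift p m : 0 < m ->
  count (fun w => ~~ has321 w && (head 0 w != p)) (permutations (iota p m))
  = catalan m - catalan m.-1.
Proof.
case: m => // m _; rewrite [m.+1.-1]/=.
have -> : iota p m.+1 = map (addn p) (iota 0 m.+1) by rewrite -iotaDl addn0.
rewrite map_perms; last exact: addnI.
transitivity (count (fun w => ~~ has321 w && (head 0 w != 0)) (permutations (iota 0 m.+1))).
  apply: eq_in_count => w; rewrite mem_permutations => Hw /=.
  rewrite has321_map; last by move=> x y _ _; rewrite ltn_add2l.
  case: w Hw => [|x w] Hw; first by have := perm_size Hw; rewrite size_iota.
  by rewrite /= -{2}(addn0 p) eqn_add2l.
have E := count_split (fun w => ~~ has321 w) (fun w => head 0 w == 0)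
            (permutations (iota 0 m.+1)).
rewrite avoid_count in E.
suff H : count (fun w => ~~ has321 w && (head 0 w == 0)) (permutations (iota 0 m.+1))
          = catalan m by lia.
rewrite cons_dec ?iota_uniq ?size_iota //= big_cons.
rewrite big_seq_cond big1 ?addn0; last first.
  move=> x /andP[Hx _]; rewrite (eq_count (a2 := pred0)) ?count_pred0 // => w.
  have : x != 0 by move: Hx; rewrite mem_iota; lia.
  by move/negbTE => /= ->; rewrite andbF.
rewrite eqxx -(addn0 1) iotaDl map_perms; last exact: addnI.
rewrite -avoid_count; apply: eq_count => w /=.
rewrite andbT has21_0 /= has321_map //; by move=> x y _ _; rewrite ltn_add2l.
Qed.

Lemma part2w m : 0 < m ->
  count (fun w => ~~ has321 w && (head 0 w != 0)) (permutations (iota 0 m))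
  = catalan m - catalan m.-1.
Proof. exact: part2w_shift. Qed.

Definition NP p a := count (fun P => ~~ has321 (rcons P a)) (permutations (p :: rem a (iota 0 p))).
Definition NS p c n := count (fun S => ~~ has321 (c :: S)) (permutations (p :: rem c (iota p.+1 (n - p.+1)))).

Lemma NPsum p : \sum_(a <- iota 0 p) NP p a = catalan p.+1 - catalan p.
Proof.
rewrite -(part1w (ltn0Sn p)) rcons_dec ?iota_uniq ?size_iota //.
rewrite iotaSr big_rcons /= (eq_count (a2 := pred0)); last first.
  by move=> w /=; rewrite last_rcons eqxx andbF.
rewrite count_pred0 addn0 big_seq [RHS]big_seq; apply: eq_bigr => a Ha.
rewrite rem_rcons_in // /NP.
have Hq : perm_eq (rcons (rem a (iota 0 p)) p) (p :: rem a (iota 0 p)) by rewrite perm_rcons.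
rewrite (perms_count_eq _ Hq).
apply: eq_count => w /=; rewrite last_rcons.
have : a != p by move: Ha; rewrite mem_iota; lia.
by move=> ->; rewrite andbT.
Qed.

Lemma NSsum p n : p < n -> \sum_(c <- iota p.+1 (n - p.+1)) NS p c n
   = catalan (n - p) - catalan (n - p).-1.
Proof.
move=> Hpn; rewrite -(part2w_shift p (_ : 0 < n - p)); last by lia.
have -> : iota p (n - p) = p :: iota p.+1 (n - p.+1) by rewrite (_ : n - p = (n - p.+1).+1) //; lia.
rewrite cons_dec ?size_iota //=; last first.
  by rewrite iota_uniq andbT mem_iota; lia.
rewrite big_cons eqxx (eq_count (a2 := pred0)); last by move=> w /=; rewrite andbF.
rewrite count_pred0 add0n big_seq [RHS]big_seq; apply: eq_bigr => c Hc.
have Hcp : (p == c) = false by move: Hc; rewrite mem_iota; lia.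
rewrite Hcp /NS; apply: eq_count => w /=.
by rewrite eq_sym Hcp andbT.
Qed.


Definition wordp m (s : 'S_m) : seq nat := [seq val (s i) | i <- enum 'I_m].

Lemma size_wordp m (s : 'S_m) : size (wordp s) = m.
Proof. by rewrite size_map size_enum_ord. Qed.

Lemma nth_wordp m (s : 'S_m) (i : 'I_m) : nth 0 (wordp s) i = s i.
Proof.
rewrite /wordp (nth_map i) ?size_enum_ord ?ltn_ord //.
by rewrite nth_ord_enum.
Qed.

Lemma wordp_perm m (s : 'S_m) : perm_eq (wordp s) (iota 0 m).
Proof.
apply: uniq_perm; rewrite ?iota_uniq //.
  rewrite /wordp map_inj_uniq ?enum_uniq //.
  by move=> i j /val_inj /perm_inj.
move=> x; rewrite mem_iota leq0n add0n /wordp; apply/idP/idP.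
  by case/mapP=> i _ ->; rewrite /= ltn_ord.
move=> Hx; apply/mapP; exists ((s^-1)%g (Ordinal Hx)); rewrite ?mem_enum //.
by rewrite permKV.
Qed.

Lemma wordp_inj m : injective (@wordp m).
Proof.
move=> s t E; apply/permP => i; apply: val_inj.
by change (nat_of_ord (s i) = nat_of_ord (t i)); rewrite -!nth_wordp E.
Qed.

Lemma wordp_surj m (w : seq nat) : perm_eq w (iota 0 m) -> exists s : 'S_m, wordp s = w.
Proof.
move=> Hw.
have Hsz : size w = m by rewrite (perm_size Hw) size_iota.
have Hlt : forall i : 'I_m, nth 0 w i < m.
  move=> i; have : nth 0 w i \in iota 0 m by rewrite -(perm_mem Hw) mem_nth // Hsz.
  by rewrite mem_iota.
pose f (i : 'I_m) : 'I_m := Ordinal (Hlt i).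
have Uw : uniq w by rewrite (perm_uniq Hw) iota_uniq.
have finj : injective f.
  move=> i j /(congr1 val) /= E; apply: val_inj => /=.
  by apply/eqP; rewrite -(nth_uniq 0 _ _ Uw) ?Hsz ?ltn_ord // E.
exists (perm finj); apply: (@eq_from_nth _ 0); first by rewrite size_wordp.
move=> k; rewrite size_wordp => Hk.
by rewrite (nth_wordp _ (Ordinal Hk)) permE.
Qed.

Lemma Sm_count m (P : pred (seq nat)) :
  #|[set s : 'S_m | P (wordp s)]| = count P (permutations (iota 0 m)).
Proof.
rewrite cardE -size_filter -(size_map (@wordp m)); apply: perm_size.
apply: uniq_perm.
- by rewrite map_inj_uniq ?enum_uniq //; apply: wordp_inj.
- by rewrite filter_uniq // permutations_uniq.
move=> w; rewrite mem_filter mem_permutations; apply/mapP/idP.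
  by case=> s; rewrite mem_enum inE => Hs ->; rewrite Hs wordp_perm.
case/andP=> Pw /wordp_surj [s Hs]; exists s => //.
by rewrite mem_enum inE Hs.
Qed.

Lemma avoids_wordp m (s : 'S_m) : avoids321 s = ~~ has321 (wordp s).
Proof.
rewrite /avoids321 /occ321 cards_eq0; apply/eqP/idP.
  move=> E; apply/has321P => -[i [j [k [H1 H2 H3 H4 H5]]]].
  rewrite size_wordp in H3.
  have Hj : j < m by lia.
  have Hi : i < m by lia.
  pose t := (Ordinal Hi, Ordinal Hj, Ordinal H3).
  have : t \in [set t : 'I_m * 'I_m * 'I_m | [&& (t.1.1 < t.1.2)%N, (t.1.2 < t.2)%N,
          (s t.1.2 < s t.1.1)%N & (s t.2 < s t.1.2)%N]].
    rewrite inE /= H1 H2 /=.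
    by rewrite -!nth_wordp /= H4 H5.
  by rewrite E inE.
move=> H; apply/setP => t; rewrite inE in_set0; apply/negbTE; apply/negP.
case/and4P=> H1 H2 H3 H4; move/negP: H; apply; apply/has321P.
exists t.1.1, t.1.2, t.2; rewrite size_wordp !nth_wordp; split=> //.
Qed.

Lemma last_wordp m (s : 'S_m) : 0 < m -> last_not_max s = (last 0 (wordp s) != m.-1).
Proof.
move=> Hm; have Hm1 : m.-1 < m by lia.
rewrite -nth_last size_wordp (nth_wordp _ (Ordinal Hm1)).
apply/forallP/idP.
  by move/(_ (Ordinal Hm1)); rewrite /= eqxx.
move=> H i; apply/implyP => /eqP Hi.
by have -> : i = Ordinal Hm1 by apply: val_inj.
Qed.

Lemma head_wordp m (s : 'S_m) : 0 < m -> first_not_min s = (head 0 (wordp s) != 0).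
Proof.
move=> Hm.
rewrite -nth0 (nth_wordp _ (Ordinal Hm)).
apply/forallP/idP.
  by move/(_ (Ordinal Hm)).
move=> H i; apply/implyP => /eqP Hi.
by have -> : i = Ordinal Hm by apply: val_inj.
Qed.

Definition occn n (w : seq nat) := #|[set t : 'I_n * 'I_n * 'I_n |
      [&& (t.1.1 < t.1.2)%N, (t.1.2 < t.2)%N,
          (nth 0 w t.1.2 < nth 0 w t.1.1)%N & (nth 0 w t.2 < nth 0 w t.1.2)%N]]|.

Lemma occ_wordp m (s : 'S_m) : occ321 s = occn m (wordp s).
Proof. by apply: eq_card => t; rewrite !inE !nth_wordp. Qed.


Definition Cw n p a c (w : seq nat) : bool :=
  [&& a < p, p < c, c < n, nth 0 w p == p,
      perm_eq (take p w) (c :: rem a (iota 0 p)),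
      perm_eq (drop p.+1 w) (a :: rem c (iota p.+1 (n - p.+1))),
      ~~ has321 (rcons (take p w) a) & ~~ has321 (c :: drop p.+1 w)].

Lemma perm_sub (s1 s2 : seq nat) : uniq s1 -> uniq s2 -> {subset s1 <= s2} ->
  size s2 <= size s1 -> perm_eq s1 s2.
Proof. by move=> U1 U2 S Hs; apply: uniq_perm => //; apply: (uniq_min_size U1 S Hs).2. Qed.

Lemma count_lt_iota b n : b <= n -> count (fun v => v < b) (iota 0 n) = b.
Proof.
move=> Hb; rewrite -(subnKC Hb) iotaD count_cat.
rewrite (eq_in_count (a2 := predT)); last by move=> x; rewrite mem_iota /=; lia.
rewrite (eq_in_count (a1 := fun v => v < b) (a2 := pred0)); last by move=> x; rewrite mem_iota /=; lia.
by rewrite count_predT count_pred0 size_iota addn0.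
Qed.

Lemma count_neq (s : seq nat) x : uniq s -> x \in s -> count (fun y => y != x) s = (size s).-1.
Proof.
elim: s => //= y s IH /andP[Hy Us]; rewrite inE.
case: (eqVneq x y) => [E|Hyx] /= Hx.
  subst y; rewrite add0n.
  rewrite (eq_in_count (a2 := predT)) ?count_predT //.
  by move=> z Hz /=; apply/eqP => E; rewrite -E Hz in Hy.
rewrite IH //; case: s {IH Us Hy} Hx => //.
Qed.

Section Core.
Variables (n : nat) (w : seq nat).
Hypothesis Hw : perm_eq w (iota 0 n).

Notation f := (nth 0 w).

Lemma szw : size w = n.
Proof. by rewrite (perm_size Hw) size_iota. Qed.

Lemma Uw : uniq w.
Proof. by rewrite (perm_uniq Hw) iota_uniq. Qed.

Lemma flt i : i < n -> f i < n.
Proof.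
move=> Hi; have : f i \in iota 0 n by rewrite -(perm_mem Hw) mem_nth // szw.
by rewrite mem_iota.
Qed.

Lemma finj i j : i < n -> j < n -> f i = f j -> i = j.
Proof. by move=> Hi Hj E; apply/eqP; rewrite -(nth_uniq 0 _ _ Uw) ?szw // E. Qed.

Lemma wmap : w = map f (iota 0 n).
Proof. by rewrite -{1}(mkseq_nth 0 w) szw. Qed.

Lemma fsurj v : v < n -> exists2 i, i < n & f i = v.
Proof.
move=> Hv; have Hin : v \in w by rewrite (perm_mem Hw) mem_iota.
by exists (index v w); rewrite ?nth_index // -szw index_mem.
Qed.

Lemma take_w p : p <= n -> take p w = map f (iota 0 p).
Proof. by move=> Hp; rewrite {1}wmap -map_take take_iota; congr map; congr iota; lia. Qed.

Lemma drop_w p : p < n -> drop p.+1 w = map f (iota p.+1 (n - p.+1)).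
Proof. by move=> Hp; rewrite {1}wmap -map_drop drop_iota. Qed.

Definition is321 i j k := [&& i < j, j < k, k < n, f j < f i & f k < f j].

Definition uniq321 i0 j0 k0 := is321 i0 j0 k0 /\
  forall i j k, is321 i j k -> [/\ i = i0, j = j0 & k = k0].

Lemma nth_rc p a x : x <= p -> p <= n ->
  nth 0 (rcons (map f (iota 0 p)) a) x = if x < p then f x else a.
Proof.
move=> Hx Hp; rewrite nth_rcons size_map size_iota.
case: ltnP => H; first by rewrite (nth_map 0) ?size_iota // nth_iota.
by have -> : x == p by lia.
Qed.

Lemma nth_cd p c y : p < n -> y < n - p ->
  nth 0 (c :: map f (iota p.+1 (n - p.+1))) y = if y == 0 then c else f (p + y).
Proof.
move=> Hp Hy; case: y Hy => [|y] Hy //=.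
by rewrite (nth_map 0) ?size_iota ?nth_iota; [congr nth; lia | lia | lia].
Qed.

Lemma uniq_Cw i0 j0 k0 : uniq321 i0 j0 k0 -> Cw n j0 (f k0) (f i0) w.
Proof.
case=> /and5P[H1 H2 H3 H4 H5] Hu.
set b := f j0.
have Eb : b = f j0 by [].
have Hj0 : j0 < n by lia.
have Hi0 : i0 < n by lia.
have S1 : forall x, x < j0 -> x != i0 -> f x < b.
  move=> x Hx Hxi; case: (ltngtP (f x) b) => // Hfx.
    have [E _ _] := Hu x j0 k0 (ltac:(apply/and5P; split=> //; lia)).
    by rewrite E eqxx in Hxi.
  by have := @finj x j0 (ltac:(lia)) Hj0 Hfx; lia.
have S2 : forall x, j0 < x -> x < n -> x != k0 -> b < f x.
  move=> x Hx Hxn Hxk; case: (ltngtP (f x) b) => // Hfx.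
    have [_ _ E] := Hu i0 j0 x (ltac:(apply/and5P; split=> //; lia)).
    by rewrite E eqxx in Hxk.
  by have := finj Hxn Hj0 Hfx; lia.
have Hb : b = j0.
  have Hbn : b <= n by have := flt Hj0; lia.
  have := count_lt_iota Hbn.
  rewrite -(perm_count_eq _ Hw) {1}wmap count_map.
  have -> : iota 0 n = iota 0 j0 ++ j0 :: iota j0.+1 (n - j0.+1).
    by rewrite -[in LHS](subnKC (ltnW Hj0)) iotaD /= -subnSK.
  rewrite count_cat /= ltnn add0n.
  rewrite (eq_in_count (a2 := fun x => x != i0)); last first.
    move=> x; rewrite mem_iota /= => Hx; case: (eqVneq x i0) => [->|Hxi] /=.
      by rewrite ltnNge ltnW.
    by apply: S1 => //; lia.
  rewrite (eq_in_count (a1 := fun x => f x < b) (a2 := pred1 k0)); last first.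
    move=> x; rewrite mem_iota /= => Hx; case: (eqVneq x k0) => [->|Hxk] /=.
      by [].
    by rewrite ltnNge ltnW //; apply: S2 => //; lia.
  have C1 : count (fun x => x != i0) (iota 0 j0) = j0.-1.
    by rewrite count_neq ?iota_uniq ?size_iota // mem_iota; lia.
  have C2 : count (pred1 k0) (iota j0.+1 (n - j0.+1)) = 1.
    rewrite count_uniq_mem ?iota_uniq // mem_iota.
    by have -> : (j0.+1 <= k0 < j0.+1 + (n - j0.+1)) = true by lia.
  rewrite C1 C2; lia.
have Hfk : f k0 < j0 by rewrite -Hb.
have Hfi : j0 < f i0 by rewrite -Hb.
have Hfin : f i0 < n by apply: flt.
have Ht := take_w (ltnW Hj0).
have Hd := drop_w Hj0.
apply/and5P; split=> //; first by apply/eqP.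
apply/and4P; split.
- rewrite Ht; apply: perm_sub.
  + by rewrite map_inj_in_uniq ?iota_uniq // => x y; rewrite !mem_iota => ? ?; apply: finj; lia.
  + rewrite /= rem_uniq ?iota_uniq // andbT.
    by apply/negP => /mem_rem; rewrite mem_iota; lia.
  + move=> v /mapP[x]; rewrite mem_iota => Hx ->.
    rewrite inE; case: (eqVneq x i0) => [->|Hxi]; first by rewrite eqxx.
    apply/orP; right; rewrite mem_rem_uniq ?iota_uniq // inE mem_iota.
    have := S1 x (ltac:(lia)) Hxi => Hlt.
    apply/andP; split; last by lia.
    by apply/eqP => E; have := @finj x k0 (ltac:(lia)) (ltac:(lia)) E; lia.
  + rewrite /= size_rem ?mem_iota ?size_map ?size_iota //; lia.
- rewrite Hd; apply: perm_sub.
  + by rewrite map_inj_in_uniq ?iota_uniq // => x y; rewrite !mem_iota => ? ?; apply: finj; lia.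
  + rewrite /= rem_uniq ?iota_uniq // andbT.
    by apply/negP => /mem_rem; rewrite mem_iota; lia.
  + move=> v /mapP[x]; rewrite mem_iota => Hx ->.
    rewrite inE; case: (eqVneq x k0) => [->|Hxk]; first by rewrite eqxx.
    apply/orP; right; rewrite mem_rem_uniq ?iota_uniq // inE mem_iota.
    have := S2 x (ltac:(lia)) (ltac:(lia)) Hxk => Hlt.
    have := flt (ltac:(lia) : x < n) => Hxn.
    apply/andP; split; last by lia.
    by apply/eqP => E; have := @finj x i0 (ltac:(lia)) (ltac:(lia)) E; lia.
  + rewrite /= size_rem ?mem_iota ?size_map ?size_iota //; lia.
- rewrite Ht; apply/has321P => -[i [j [k [K1 K2 K3 K4 K5]]]].
  rewrite size_rcons size_map size_iota in K3.
  rewrite !nth_rc in K4 K5; try lia.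
  have Hi : i < j0 by lia.
  have Hj : j < j0 by lia.
  rewrite Hi Hj in K4 K5.
  case: (ltnP k j0) => Hk.
    rewrite Hk in K5.
    have [_ E _] := Hu i j k (ltac:(apply/and5P; split=> //; lia)); lia.
  have Hk2 : (k < j0) = false by lia.
  rewrite Hk2 /= in K5.
  have [_ E _] := Hu i j k0 (ltac:(apply/and5P; split=> //; lia)); lia.
- rewrite Hd; apply/has321P => -[i [j [k [K1 K2 K3 K4 K5]]]].
  rewrite /= size_map size_iota in K3.
  rewrite !nth_cd in K4 K5; try lia.
  have Hj : (j == 0) = false by lia.
  have Hk : (k == 0) = false by lia.
  rewrite Hj Hk in K4 K5.
  case: (eqVneq i 0) => Hii; rewrite ?Hii /= in K4.
    have [_ E _] := Hu i0 (j0 + j) (j0 + k) (ltac:(apply/and5P; split=> //; lia)); lia.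
  rewrite (negbTE Hii) in K4.
  have [E _ _] := Hu (j0 + i) (j0 + j) (j0 + k) (ltac:(apply/and5P; split=> //; lia)); lia.
Qed.

Lemma Cw_uniq p a c : Cw n p a c w -> exists i0 k0, [/\ uniq321 i0 p k0, a = f k0 & c = f i0].
Proof.
case/and5P => Hap Hpc Hcn /eqP Hfp /and4P[HP HS QP QS].
have Hpn : p < n by lia.
rewrite take_w in HP QP; last by lia.
rewrite drop_w // in HS QS.
have FP : forall x, x < p -> f x = c \/ (f x < p /\ f x != a).
  move=> x Hx; have : f x \in c :: rem a (iota 0 p).
    by rewrite -(perm_mem HP); apply: map_f; rewrite mem_iota; lia.
  rewrite inE mem_rem_uniq ?iota_uniq // inE mem_iota.
  case/orP => [/eqP -> | /andP[H1 H2]]; [by left | right; split=> //; lia].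
have FS : forall x, p < x -> x < n -> f x = a \/ (p < f x /\ f x != c).
  move=> x Hx Hxn; have : f x \in a :: rem c (iota p.+1 (n - p.+1)).
    by rewrite -(perm_mem HS); apply: map_f; rewrite mem_iota; lia.
  rewrite inE mem_rem_uniq ?iota_uniq // inE mem_iota.
  case/orP => [/eqP -> | /andP[H1 H2]]; [by left | right; split=> //; lia].
have [i0 Hi0 Ei0] : exists2 i0, i0 < p & c = f i0.
  have : c \in map f (iota 0 p) by rewrite (perm_mem HP) mem_head.
  by case/mapP => x; rewrite mem_iota => Hx ->; exists x => //; lia.
have [k0 Hk0 Ek0] : exists2 k0, p < k0 < n & a = f k0.
  have : a \in map f (iota p.+1 (n - p.+1)) by rewrite (perm_mem HS) mem_head.
  by case/mapP => x; rewrite mem_iota => Hx ->; exists x => //; lia.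
have Ic : forall x, x < n -> f x = c -> x = i0.
  by move=> x Hx E; apply: finj => //; [lia | rewrite E].
have Ia : forall x, x < n -> f x = a -> x = k0.
  by move=> x Hx E; apply: finj => //; [lia | rewrite E].
have NoP1 : forall i j k, i < j -> j < k -> k < p -> f j < f i -> f k < f j -> False.
  move=> i j k H1 H2 H3 H4 H5; move/negP: QP; apply; apply/has321P.
  exists i, j, k; rewrite size_rcons size_map size_iota !nth_rc; try lia.
  have -> : i < p by lia. have -> : j < p by lia. have -> : k < p by lia.
  split=> //; lia.
have NoP2 : forall i j, i < j -> j < p -> f j < f i -> a < f j -> False.
  move=> i j H1 H2 H4 H5; move/negP: QP; apply; apply/has321P.
  exists i, j, p; rewrite size_rcons size_map size_iota !nth_rc; try lia.
  have -> : i < p by lia. have -> : j < p by lia. rewrite ltnn.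
  split=> //; lia.
have NoS1 : forall i j k, p < i -> i < j -> j < k -> k < n -> f j < f i -> f k < f j -> False.
  move=> i j k H0 H1 H2 H3 H4 H5; move/negP: QS; apply; apply/has321P.
  exists (i - p), (j - p), (k - p); rewrite /= size_map size_iota !nth_cd; try lia.
  have -> : (i - p == 0) = false by lia.
  have -> : (j - p == 0) = false by lia.
  have -> : (k - p == 0) = false by lia.
  rewrite !subnKC; try lia.
  split=> //; lia.
have NoS2 : forall j k, p < j -> j < k -> k < n -> f j < c -> f k < f j -> False.
  move=> j k H1 H2 H3 H4 H5; move/negP: QS; apply; apply/has321P.
  exists 0, (j - p), (k - p); rewrite /= size_map size_iota !nth_cd; try lia.
  have -> : (j - p == 0) = false by lia.
  have -> : (k - p == 0) = false by lia.
  rewrite !subnKC; try lia.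
  split=> //=; lia.
exists i0, k0; split=> //.
split.
  by apply/and5P; split; lia.
move=> i j k /and5P[H1 H2 H3 H4 H5].
case: (ltngtP j p) => Hjp.
- have Fi := FP i (ltac:(lia)). have Fj := FP j Hjp.
  have Ii := Ic i (ltac:(lia)). have Ij := Ic j (ltac:(lia)).
  case: (ltngtP k p) => Hkp.
  + by exfalso; apply: (NoP1 i j k).
  + have Fk := FS k Hkp H3. have Ik := Ia k H3.
    exfalso; case: Fj => Fj.
      case: Fi => Fi; lia.
    have Fk' : f k = a by lia.
    by apply: (NoP2 i j) => //; lia.
  + exfalso; subst k; lia.
- have Fj := FS j Hjp (ltac:(lia)). have Fk := FS k (ltac:(lia)) H3.
  have Ij := Ia j (ltac:(lia)). have Ik := Ia k H3.
  exfalso; case: (ltngtP i p) => Hip.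
  + have Fi := FP i Hip. case: Fi => Fi.
      by apply: (NoS2 j k) => //; lia.
    lia.
  + by apply: (NoS1 i j k).
  + subst i; lia.
- subst j.
  have Fi := FP i H1. have Fk := FS k H2 H3.
  have Ii := Ic i (ltac:(lia)). have Ik := Ia k H3.
  split=> //; lia.
Qed.

End Core.


Definition Tset n (w : seq nat) := [set t : 'I_n * 'I_n * 'I_n |
      [&& (t.1.1 < t.1.2)%N, (t.1.2 < t.2)%N,
          (nth 0 w t.1.2 < nth 0 w t.1.1)%N & (nth 0 w t.2 < nth 0 w t.1.2)%N]].

Lemma occnE n w : occn n w = #|Tset n w|.
Proof. by []. Qed.

Definition key n (w : seq nat) : nat * nat * nat :=
  if [pick t in Tset n w] is Some t then (nat_of_ord t.1.2, nth 0 w t.2, nth 0 w t.1.1)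
  else (0, 0, 0).

Section Key.
Variables (n : nat) (w : seq nat).
Hypothesis Hw : perm_eq w (iota 0 n).
Notation f := (nth 0 w).

Lemma key_single t0 : Tset n w = [set t0] ->
  key n w = (nat_of_ord t0.1.2, f t0.2, f t0.1.1).
Proof.
move=> E; rewrite /key; case: pickP => [t|H].
  by rewrite E in_set1 => /eqP ->.
by have := H t0; rewrite E set11.
Qed.

Lemma A1 : occn n w == 1 -> exists i0 j0 k0,
  uniq321 n w i0 j0 k0 /\ key n w = (j0, f k0, f i0).
Proof.
rewrite occnE => /cards1P[t0 Et0].
have Ht0 : t0 \in Tset n w by rewrite Et0 set11.
rewrite inE in Ht0; case/and4P: Ht0 => H1 H2 H3 H4.
exists t0.1.1, t0.1.2, t0.2; split; last exact: key_single.
split; first by apply/and5P; split=> //; apply: ltn_ord.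
move=> i j k /and5P[K1 K2 K3 K4 K5].
have Hi : i < n by lia.
have Hj : j < n by lia.
have : (Ordinal Hi, Ordinal Hj, Ordinal K3) \in Tset n w.
  by rewrite inE /= K1 K2 K4 K5.
by rewrite Et0 in_set1 => /eqP <-.
Qed.

Lemma A2 i0 j0 k0 : uniq321 n w i0 j0 k0 -> occn n w == 1 /\ key n w = (j0, f k0, f i0).
Proof.
case=> /and5P[H1 H2 H3 H4 H5] Hu.
have Hi : i0 < n by lia.
have Hj : j0 < n by lia.
set t0 := (Ordinal Hi, Ordinal Hj, Ordinal H3).
have E : Tset n w = [set t0].
  apply/setP => t; rewrite !inE; apply/idP/eqP.
    case/and4P => K1 K2 K3 K4.
    have [E1 E2 E3] := Hu t.1.1 t.1.2 t.2 (ltac:(apply/and5P; split=> //; apply: ltn_ord)).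
    case: t E1 E2 E3 {K1 K2 K3 K4} => [[ti tj] tk] /= E1 E2 E3.
    by rewrite /t0; congr (_, _, _); apply: val_inj.
  by move=> ->; rewrite /t0 /= H1 H2 H4 H5.
by rewrite occnE E cards1 (key_single E).
Qed.

Lemma Mlem p a c : Cw n p a c w = (occn n w == 1) && (key n w == (p, a, c)).
Proof.
apply/idP/andP.
  move=> H; have [i0 [k0 [U Ea Ec]]] := Cw_uniq Hw H.
  have [O K] := A2 U; split=> //; by rewrite K Ea Ec.
case=> O /eqP K; have [i0 [j0 [k0 [U K']]]] := A1 O.
rewrite K' in K; case: K => <- <- <-.
exact: (@uniq_Cw n w Hw i0 j0 k0 U).
Qed.

Lemma key_bound : occn n w == 1 -> [/\ (key n w).1.1 < n, (key n w).1.2 < n & (key n w).2 < n].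
Proof.
case/A1 => i0 [j0 [k0 [[/and5P[H1 H2 H3 H4 H5] _] ->]]] /=.
split; first by lia.
  by apply: (flt Hw).
by apply: (flt Hw); lia.
Qed.

End Key.


Lemma sum_ind n x (G : nat -> nat) : x < n -> \sum_(i < n) ((x == i) * G i) = G x.
Proof.
move=> Hx; rewrite (bigD1 (Ordinal Hx)) //= eqxx mul1n big1 ?addn0 // => i Hi.
have -> : (x == i) = false.
  apply/negbTE; apply: contra Hi => /eqP E; apply/eqP; apply: val_inj; by rewrite /= E.
by [].
Qed.

Lemma sum_ind_c n x (y : nat) : x < n -> \sum_(i < n) ((x == i) * y) = y.
Proof. exact: (@sum_ind n x (fun _ => y)). Qed.

Lemma point_decomp n w : perm_eq w (iota 0 n) ->
  (occn n w == 1 : nat) = \sum_(p < n) \sum_(a < n) \sum_(c < n) (Cw n p a c w : nat).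
Proof.
move=> Hw.
case O: (occn n w == 1).
  have [B1 B2 B3] := key_bound Hw O.
  have E : forall p a c, (Cw n p a c w : nat) =
      ((key n w).1.1 == p) * (((key n w).1.2 == a) * (((key n w).2 == c) * 1)).
    move=> p a c; rewrite (Mlem Hw) O /=.
    case: (key n w) => [[k1 k2] k3] /=; rewrite !xpair_eqE.
    by case: (k1 == p); case: (k2 == a); case: (k3 == c).
  symmetry.
  transitivity (\sum_(p < n) (((key n w).1.1 == p) * (\sum_(a < n) (((key n w).1.2 == a) *
        \sum_(c < n) (((key n w).2 == c) * 1))))); last by rewrite !sum_ind_c.
  apply: eq_bigr => p _; rewrite big_distrr; apply: eq_bigr => a _ /=.
  rewrite big_distrr big_distrr; apply: eq_bigr => c _ /=.
  by rewrite E.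
rewrite big1 // => p _; rewrite big1 // => a _; rewrite big1 // => c _.
by rewrite (Mlem Hw) O.
Qed.

Lemma count_decomp n (l : seq (seq nat)) : (forall w, w \in l -> perm_eq w (iota 0 n)) ->
  count (fun w => occn n w == 1) l =
  \sum_(p < n) \sum_(a < n) \sum_(c < n) count (Cw n p a c) l.
Proof.
elim: l => [|w l IH] Hl.
  by rewrite big1 // => p _; rewrite big1 // => a _; rewrite big1.
rewrite /= IH; last by move=> v Hv; apply: Hl; rewrite inE Hv orbT.
rewrite (point_decomp (Hl w (mem_head _ _))) -big_split; apply: eq_bigr => p _.
rewrite -big_split; apply: eq_bigr => a _.
by rewrite -big_split.
Qed.

Definition NPc p a c := count (fun P => ~~ has321 (rcons P a)) (permutations (c :: rem a (iota 0 p))).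
Definition NSc n p a c := count (fun S => ~~ has321 (c :: S))
   (permutations (a :: rem c (iota p.+1 (n - p.+1)))).

Lemma count_Cw n p a c : count (Cw n p a c) (permutations (iota 0 n)) =
  if [&& a < p, p < c & c < n] then NPc p a c * NSc n p a c else 0.
Proof.
case: ifP => Hc; last first.
  rewrite (eq_count (a2 := pred0)) ?count_pred0 // => w /=.
  by apply/negbTE; apply: contraFN Hc => /and5P[-> -> -> _ _].
case/and3P: Hc => Hap Hpc Hcn.
set VP := c :: rem a (iota 0 p).
set VS := a :: rem c (iota p.+1 (n - p.+1)).
set QP := fun P => ~~ has321 (rcons P a).
set QS := fun S => ~~ has321 (c :: S).
rewrite /NPc /NSc -/VP -/VS -/QP -/QS -!size_filter.
rewrite -(size_allpairs (fun P S => P ++ p :: S)); apply: perm_size.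
have szP : forall P, P \in filter QP (permutations VP) -> size P = p.
  move=> P; rewrite mem_filter mem_permutations => /andP[_ /perm_size ->].
  by rewrite /VP /= size_rem ?size_iota ?mem_iota //; lia.
have szS : forall S, S \in filter QS (permutations VS) -> size S = n - p.+1.
  move=> S; rewrite mem_filter mem_permutations => /andP[_ /perm_size ->].
  by rewrite /VS /= size_rem ?size_iota ?mem_iota //; lia.
apply: uniq_perm.
- by rewrite filter_uniq // permutations_uniq.
- apply: allpairs_uniq; rewrite ?filter_uniq ?permutations_uniq //.
  move=> [P1 S1] [P2 S2] /allpairsP[[x1 y1] [Hx1 Hy1 [-> ->]]]
                         /allpairsP[[x2 y2] [Hx2 Hy2 [-> ->]]] /= E.
  have E1 := congr1 (take p) E.
  rewrite !take_size_cat ?szP // in E1.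
  have E2 := congr1 (drop p) E.
  rewrite !drop_size_cat ?szP // in E2.
  by case: E2 => ->; rewrite E1.
move=> w; rewrite mem_filter mem_permutations; apply/andP/allpairsP.
  case=> HC Hw; case/and5P: HC => _ _ _ /eqP Hfp /and4P[HP HS QPw QSw].
  exists (take p w, drop p.+1 w); split=> /=.
  - by rewrite mem_filter mem_permutations HP andbT.
  - by rewrite mem_filter mem_permutations HS andbT.
  have Hpw : p < size w by rewrite (perm_size Hw) size_iota; lia.
  have E : drop p w = p :: drop p.+1 w by rewrite (drop_nth 0) // Hfp.
  by rewrite -E cat_take_drop.
case=> [[P S]] [/= HP HS ->].
have HszP := szP P HP; have HszS := szS S HS.
move: HP HS; rewrite !mem_filter !mem_permutations => /andP[QPP HP] /andP[QSS HS].
have Hw : perm_eq (P ++ p :: S) (iota 0 n).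
  have Ea : perm_eq (iota 0 p) (a :: rem a (iota 0 p)) by apply: perm_to_rem; rewrite mem_iota; lia.
  have Ec : perm_eq (iota p.+1 (n - p.+1)) (c :: rem c (iota p.+1 (n - p.+1))).
    by apply: perm_to_rem; rewrite mem_iota; lia.
  have -> : iota 0 n = iota 0 p ++ p :: iota p.+1 (n - p.+1).
    by rewrite -[in LHS](subnKC (ltnW (ltn_trans Hpc Hcn))) iotaD /= -subnSK //; lia.
  apply/seq.permP => q.
  move/seq.permP: HP => /(_ q); move/seq.permP: HS => /(_ q).
  move/seq.permP: Ea => /(_ q); move/seq.permP: Ec => /(_ q).
  rewrite !count_cat /= => Ec' Ea' HS' HP'.
  rewrite /VP /VS /= in HP' HS'; lia.
split=> //.
apply/and5P; split=> //.
  by rewrite nth_cat HszP ltnn subnn.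
rewrite take_size_cat //.
have -> : drop p.+1 (P ++ p :: S) = S.
  by rewrite -cat_rcons drop_size_cat // size_rcons HszP.
by apply/and4P; split.
Qed.


Definition swp (u v x : nat) := if x == u then v else if x == v then u else x.

Lemma swpK u v : involutive (swp u v).
Proof.
move=> x; rewrite /swp.
case: (eqVneq x u) => [->|Hxu]; first by rewrite eqxx; case: (eqVneq v u) => [->|Hvu]; rewrite ?eqxx.
case: (eqVneq x v) => [->|Hxv]; first by rewrite eqxx; case: (eqVneq u v).
by rewrite (negbTE Hxu) (negbTE Hxv).
Qed.

Lemma swp_inj u v : injective (swp u v).
Proof. exact: can_inj (swpK u v). Qed.

Lemma NPc_eq p a c : a < p -> p < c -> NPc p a c = NP p a.
Proof.
move=> Hap Hpc.
have Emap : map (swp p c) (p :: rem a (iota 0 p)) = c :: rem a (iota 0 p).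
  rewrite /= /swp eqxx; congr cons; apply: map_id_in => x /mem_rem.
  rewrite mem_iota => Hx.
  have -> : (x == p) = false by lia.
  by have -> : (x == c) = false by lia.
rewrite /NPc -Emap map_perms; last exact: swp_inj.
apply: eq_in_count => w; rewrite mem_permutations => Hw /=.
have Ea : swp p c a = a.
  rewrite /swp; have -> : (a == p) = false by lia.
  by have -> : (a == c) = false by lia.
have -> : rcons (map (swp p c) w) a = map (swp p c) (rcons w a) by rewrite map_rcons Ea.
rewrite has321_map //.
have Hle : forall x, x \in rcons w a -> x <= p.
  move=> x; rewrite mem_rcons inE => /orP[/eqP -> | Hx]; first by lia.
  move: Hx; rewrite (perm_mem Hw) inE => /orP[/eqP -> // | /mem_rem].
  by rewrite mem_iota; lia.
move=> x y /Hle Hx /Hle Hy; rewrite /swp.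
case: (eqVneq x p) => Exp; case: (eqVneq y p) => Eyp; try (have -> : (x == c) = false by lia);
  try (have -> : (y == c) = false by lia); apply/idP/idP; lia.
Qed.

Lemma NSc_eq n p a c : a < p -> p < c -> NSc n p a c = NS p c n.
Proof.
move=> Hap Hpc.
have Emap : map (swp p a) (p :: rem c (iota p.+1 (n - p.+1))) = a :: rem c (iota p.+1 (n - p.+1)).
  rewrite /= /swp eqxx; congr cons; apply: map_id_in => x /mem_rem.
  rewrite mem_iota => Hx.
  have -> : (x == p) = false by lia.
  by have -> : (x == a) = false by lia.
rewrite /NSc -Emap map_perms; last exact: swp_inj.
apply: eq_in_count => w; rewrite mem_permutations => Hw /=.
have Ec : swp p a c = c.
  rewrite /swp; have -> : (c == p) = false by lia.
  by have -> : (c == a) = false by lia.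
have -> : has21 c [seq swp p a i | i <- w] || has321 [seq swp p a i | i <- w] =
          has321 (map (swp p a) (c :: w)) by rewrite /= Ec.
rewrite has321_map //.
have Hge : forall x, x \in c :: w -> p <= x.
  move=> x; rewrite inE => /orP[/eqP -> | Hx]; first by lia.
  move: Hx; rewrite (perm_mem Hw) inE => /orP[/eqP -> // | /mem_rem].
  by rewrite mem_iota; lia.
move=> x y /Hge Hx /Hge Hy; rewrite /swp.
case: (eqVneq x p) => Exp; case: (eqVneq y p) => Eyp; try (have -> : (x == a) = false by lia);
  try (have -> : (y == a) = false by lia); apply/idP/idP; lia.
Qed.


Lemma part1 m : 0 < m ->
  #|[set s : 'S_m | avoids321 s && last_not_max s]| = catalan m - catalan m.-1.
Proof.
move=> Hm.
have -> : [set s : 'S_m | avoids321 s && last_not_max s] =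
   [set s | (fun w => ~~ has321 w && (last 0 w != m.-1)) (wordp s)].
  by apply/setP => s; rewrite !inE avoids_wordp last_wordp.
by rewrite (Sm_count m (fun w => ~~ has321 w && (last 0 w != m.-1))) part1w.
Qed.

Lemma part2 m : 0 < m ->
  #|[set s : 'S_m | avoids321 s && first_not_min s]| = catalan m - catalan m.-1.
Proof.
move=> Hm.
have -> : [set s : 'S_m | avoids321 s && first_not_min s] =
   [set s | (fun w => ~~ has321 w && (head 0 w != 0)) (wordp s)].
  by apply/setP => s; rewrite !inE avoids_wordp head_wordp.
by rewrite (Sm_count m (fun w => ~~ has321 w && (head 0 w != 0))) part2w.
Qed.


Lemma part3w n : 3 <= n ->
  count (fun w => occn n w == 1) (permutations (iota 0 n)) =
  \sum_(2 <= b < n) (catalan b - catalan b.-1) * (catalan (n - b + 1) - catalan (n - b)).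
Proof.
move=> Hn.
rewrite count_decomp; last by move=> w; rewrite mem_permutations.
transitivity (\sum_(p < n) (\sum_(a < n) (if a < p then NP p a else 0)) *
                          (\sum_(c < n) (if p < c then NS p c n else 0))).
  apply: eq_bigr => p _; rewrite big_distrl; apply: eq_bigr => a _ /=.
  rewrite big_distrr; apply: eq_bigr => c _ /=.
  rewrite count_Cw ltn_ord andbT.
  case: (ltnP a p) => Hap; case: (ltnP p c) => Hpc //=; rewrite ?muln0 //.
  by rewrite NPc_eq // NSc_eq.
transitivity (\sum_(p < n) (catalan p.+1 - catalan p) * (catalan (n - p) - catalan (n - p).-1)).
  apply: eq_bigr => p _.
  rewrite -big_mkcond /= -(big_ord_widen _ (fun a => NP p a) (ltnW (ltn_ord p))).
  rewrite -(big_mkord xpredT (fun a => NP p a)) /index_iota subn0 NPsum.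
  rewrite -big_mkcond /=.
  rewrite -(NSsum (ltn_ord p)) -[iota p.+1 (n - p.+1)]/(index_iota p.+1 n) big_geq_mkord.
  by congr (_ * _); apply: eq_bigl.
set G := fun b => (catalan b - catalan b.-1) * (catalan (n - b + 1) - catalan (n - b)).
transitivity (\sum_(p < n) G p.+1).
  apply: eq_bigr => p _; rewrite /G /=.
  have Hp := ltn_ord p.
  have -> : n - p.+1 + 1 = n - p by lia.
  by have -> : (n - p).-1 = n - p.+1 by lia.
rewrite -(big_mkord xpredT (fun p => G p.+1)).
rewrite -(big_add1 _ _ 0 n.+1 xpredT G) big_ltn; last by lia.
rewrite big_nat_recr /=; last by lia.
have -> : G 1 = 0 by rewrite /G.
have -> : G n = 0.
  rewrite /G subnn add0n.
  have -> : catalan 1 - catalan 0 = 0 by [].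
  by rewrite muln0.
by rewrite add0n addn0.
Qed.

Theorem mainTheorem3 :
  (forall m : nat, 0 < m ->
     #|[set s : 'S_m | avoids321 s && last_not_max s]| = catalan m - catalan m.-1)
  /\
  (forall m : nat, 0 < m ->
     #|[set s : 'S_m | avoids321 s && first_not_min s]| = catalan m - catalan m.-1)
  /\
  (forall n : nat, 3 <= n ->
     #|[set s : 'S_n | occ321 s == 1]| =
       \sum_(2 <= b < n) (catalan b - catalan b.-1) * (catalan (n - b + 1) - catalan (n - b))).
Proof.
split; first exact: part1.
split; first exact: part2.
move=> n Hn.
have -> : [set s : 'S_n | occ321 s == 1] = [set s | (fun w => occn n w == 1) (wordp s)].
  by apply/setP => s; rewrite !inE occ_wordp.
by rewrite (Sm_count n (fun w => occn n w == 1)) part3w.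
Qed.
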